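(* Let $(X,d)$ be a compact metric space and $f_{0,\infty}=\{f_n\}_{n=0}^\infty$ an equi-continuous sequence of continuous self-maps of $X$. If $h(f_{0,\infty})>0$, then $h^{*}(f_{0,\infty})=+\infty$.
   Context: $f_{0,\infty}$ is equi-continuous if for every $\epsilon>0$ there is $\delta>0$ with $d(x,y)<\delta\Rightarrow d(f_n x,f_n y)<\epsilon$ for all $n\ge0$. $f_0^n=f_{n-1}\circ\cdots\circ f_0$, $f_0^0=\mathrm{id}$. $\mathcal S$ is the set of strictly increasing sequences $A=\{a_i\}_{i\ge1}$ of nonnegative integers and $h_A(f_{0,\infty})=\sup_{\mathscr A}\limsup_{n\to\infty}\frac1n\log\mathcal N(\bigvee_{i=1}^n (f_0^{a_i})^{-1}\mathscr A)$ over finite open covers $\mathscr A$, with $\bigvee$ the common refinement and $\mathcal N$ the minimal cardinality of a subcover. The topological entropy is $h(f_{0,\infty})=h_A(f_{0,\infty})$ for $A=\{0,1,2,\dots\}$, and the supremum topological sequence entropy is $h^*(f_{0,\infty})=\sup_{A\in\mathcal S}h_A(f_{0,\infty})$. *)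

(* Defs.v *)
From HB Require Import structures.
From mathcomp Require Import all_boot all_order all_algebra.
From mathcomp Require Import all_classical all_reals all_analysis.
Set Implicit Arguments. Unset Strict Implicit. Unset Printing Implicit Defensive.
Import Order.TTheory GRing.Theory Num.Theory.
Local Open Scope classical_set_scope.
Local Open Scope ring_scope.

Section NonAutonomousEntropy.
Context {R : realType} {X : metricType R}.

Definition equicontinuous_seq (f : nat -> X -> X) : Prop :=
  forall eps : R, 0 < eps -> exists2 delta : R, 0 < delta &
    forall x y : X, mdist x y < delta -> forall n, mdist (f n x) (f n y) < eps.

Fixpoint fiter (f : nat -> X -> X) (n : nat) : X -> X :=
  match n with
  | 0 => id
  | m.+1 => f m \o fiter f m
  end.

Definition open_cover (U : seq (set X)) : Prop :=
  (forall i, (i < size U)%N -> open (nth set0 U i)) /\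
  (forall x : X, exists2 i, (i < size U)%N & nth set0 U i x).

Definition Ncov (F : set (set X)) : \bar R :=
  ereal_inf [set ((size s)%:R)%:E | s in
    [set s : seq (set X) | (forall i, (i < size s)%N -> F (nth set0 s i)) /\
       (forall x : X, exists2 i, (i < size s)%N & nth set0 s i x)]].

(** the common refinement \/_{i=1}^n (f_0^{a_i})^{-1} U, where the
    increasing sequence a_1 < a_2 < ... is encoded as a 0-indexed
    a : nat -> nat (a i = a_{i+1}) *)
Definition join_cover (f : nat -> X -> X) (a : nat -> nat) (U : seq (set X))
    (n : nat) : set (set X) :=
  [set B | exists j : nat -> nat, (forall i, (i < n)%N -> (j i < size U)%N) /\
     B = \bigcap_(i in [set i | (i < n)%N]) (fiter f (a i) @^-1` nth set0 U (j i))].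

Definition strictly_increasing (a : nat -> nat) : Prop :=
  forall i j, (i < j)%N -> (a i < a j)%N.

Definition seq_entropy (f : nat -> X -> X) (a : nat -> nat) : \bar R :=
  ereal_sup [set limn_esup (fun n : nat =>
      ((ln (fine (Ncov (join_cover f a U n)))) / n%:R)%:E) | U in open_cover].

Definition top_entropy (f : nat -> X -> X) : \bar R := seq_entropy f id.

Definition sup_seq_entropy (f : nat -> X -> X) : \bar R :=
  ereal_sup [set seq_entropy f a | a in strictly_increasing].

End NonAutonomousEntropy.

(* Main.v *)
Require Import Defs.
From HB Require Import structures.
From mathcomp Require Import all_boot all_order all_algebra.
From mathcomp Require Import all_classical all_reals all_analysis.
From mathcomp Require Import ring lra.
Import Order.TTheory GRing.Theory Num.Theory.
Local Open Scope classical_set_scope.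
Local Open Scope ring_scope.
Set Implicit Arguments. Unset Strict Implicit.

Section Aux.
Context {R : realType} {X : metricType R}.

Lemma mball_open (x : X) (r : R) : open [set y | mdist x y < r].
Proof.
rewrite openE => y /= hy; rewrite /interior.
have h : 0 < r - mdist x y by rewrite subr_gt0.
apply: (@filterS _ _ _ (ball y (r - mdist x y))); last exact: nbhsx_ballx.
move=> z; rewrite ballEmdist /= => hz.
by apply: le_lt_trans (metric_triangle x y z) _; rewrite -ltrBrDl.
Qed.

Lemma open_mball (A : set X) (x : X) : open A -> A x ->
  exists2 r, 0 < r & forall z, mdist x z < r -> A z.
Proof.
rewrite openE => /[apply] /nbhs_ex [d hd]; exists d%:num => // z hz.
by apply: hd; rewrite ballEmdist.
Qed.

Lemma finite_balls (r : X -> R) : compact [set: X] -> (forall x, 0 < r x) ->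
  exists s : seq X, forall z, exists2 x, x \in s & mdist x z < r x.
Proof.
move=> cX rpos; apply: contrapT => hno.
pose B (s : seq X) := [set z | forall x, x \in s -> ~ mdist x z < r x].
have Bne s : B s !=set0.
  apply: contrapT => hB; apply: hno; exists s => z.
  apply: contrapT => hz; apply: hB; exists z => x xs hx; apply: hz.
  by exists x.
have FF : Filter (filter_from [set: seq X] B).
  apply: filter_from_filter; first by exists [::].
  move=> i j _ _; exists (i ++ j) => // z Bz; split => x xs; apply: Bz;
    by rewrite mem_cat xs ?orbT.
have PF : ProperFilter (filter_from [set: seq X] B).
  by apply: filter_from_proper => i _; exact: Bne.
have [p [_ clp]] := cX _ PF (@filterT _ _ FF).
have hF : filter_from [set: seq X] B (B [:: p]) by exists [:: p].
have [z [Bz bz]] := clp _ _ hF (nbhsx_ballx p (r p) (rpos p)).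
by apply: (Bz p (mem_head _ _)); move: bz; rewrite ballEmdist.
Qed.

Lemma lebesgue_num (U : seq (set X)) : compact [set: X] -> open_cover U ->
  exists2 e, 0 < e & forall y, exists2 i, (i < size U)%N &
    forall z, mdist y z < e -> nth set0 U i z.
Proof.
move=> cX [Uop Ucov].
have : forall x, exists p : nat * R, [/\ 0 < p.2, (p.1 < size U)%N &
    forall z, mdist x z < p.2 + p.2 -> nth set0 U p.1 z].
  move=> x; have [i iU Ux] := Ucov x.
  have [r r0 hr] := @open_mball _ x (Uop i iU) Ux.
  exists (i, r/2); split => //=; first by rewrite divr_gt0.
  by move=> z; rewrite -splitr; exact: hr.
case/choice => g hg.
have [s hs] := @finite_balls (fun x => (g x).2) cX (fun x => let: And3 h _ _ := hg x in h).
pose mn t := foldr (fun x acc => Order.min (g x).2 acc) 1 t.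
have foldP : forall t, 0 < mn t /\ forall x, x \in t -> mn t <= (g x).2.
  elim => [|x t [IH1 IH2]] /=; first by split.
  split; first by rewrite lt_min IH1 andbT; case: (hg x).
  move=> y; rewrite in_cons => /orP [/eqP ->|yt]; first by rewrite ge_min lexx.
  by rewrite ge_min (IH2 _ yt) orbT.
have [e0 ele] := foldP s.
exists (mn s) => // y; have [x xs hx] := hs y.
case: (hg x) => _ xU hxU; exists (g x).1 => // z hz; apply: hxU.
apply: le_lt_trans (metric_triangle x y z) _.
by apply: ltrD => //; apply: lt_le_trans hz (ele x xs).
Qed.

Lemma fiterD (f : nat -> X -> X) s r x :
  fiter f (s + r) x = fiter (fun m => f (s + m)) r (fiter f s x).
Proof. by elim: r => [|r IH] /=; [rewrite addn0 | rewrite addnS /= IH]. Qed.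

Lemma comp_equi (f : nat -> X -> X) : equicontinuous_seq f ->
  forall k e, 0 < e -> exists2 d, 0 < d & forall x y, mdist x y < d ->
  forall s r, (r <= k)%N ->
  mdist (fiter (fun m => f (s + m)) r x) (fiter (fun m => f (s + m)) r y) < e.
Proof.
move=> equi; elim => [|k IH] e e0.
  by exists e => // x y hxy s r; rewrite leqn0 => /eqP -> /=.
have [d1 d10 hd1] := equi e e0.
have m0 : 0 < Order.min d1 e by rewrite lt_min d10 e0.
have [d2 d20 hd2] := IH (Order.min d1 e) m0.
exists d2 => // x y hxy s r; rewrite leq_eqVlt => /orP [/eqP -> | rk].
  apply: hd1; apply: lt_le_trans (hd2 _ _ hxy s k (leqnn k)) _.
  by rewrite ge_min lexx.
by apply: lt_le_trans (hd2 _ _ hxy s r rk) _; rewrite ge_min lexx orbT.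
Qed.

Definition covl (F : set (set X)) (s : seq (set X)) :=
  (forall i, (i < size s)%N -> F (nth set0 s i)) /\
  (forall x : X, exists2 i, (i < size s)%N & nth set0 s i x).

Lemma Ncov_ge0 (F : set (set X)) : (0 <= Ncov F)%E.
Proof. by apply: le_ereal_inf_tmp => _ [s _ <-]; rewrite lee_fin ler0n. Qed.

Lemma Ncov_le_size (F : set (set X)) s : covl F s -> (Ncov F <= (size s)%:R%:E)%E.
Proof. by move=> h; apply: ereal_inf_lbound; exists s. Qed.

Lemma Ncov_fin (F : set (set X)) s : covl F s -> Ncov F \is a fin_num.
Proof.
move=> h; rewrite ge0_fin_numE ?Ncov_ge0 //.
exact: (le_lt_trans (Ncov_le_size h) (ltry _)).
Qed.

Lemma Ncov_refine (F G : set (set X)) :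
  (forall B, G B -> exists2 A, F A & B `<=` A) -> (Ncov F <= Ncov G)%E.
Proof.
move=> h; apply: le_ereal_inf_tmp => _ [s [sG scov] <-].
have : forall B, exists A, G B -> F A /\ B `<=` A.
  move=> B; case: (pselect (G B)) => [/h [A FA BA]|nG]; first by exists A.
  by exists B.
case/choice => g hg; apply: ereal_inf_lbound; exists (map g s); last by rewrite size_map.
split.
  move=> i; rewrite size_map => iS; rewrite (nth_map set0) //.
  exact: (hg _ (sG i iS)).1.
move=> x; have [i iS hx] := scov x; exists i; rewrite ?size_map //.
by rewrite (nth_map set0) //; apply: (hg _ (sG i iS)).2.
Qed.

Lemma join_covl (f : nat -> X -> X) (a : nat -> nat) (U : seq (set X)) n :
  (forall x : X, exists2 i, (i < size U)%N & nth set0 U i x) ->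
  exists s, covl (join_cover f a U n) s.
Proof.
move=> Ucov; elim: n => [|n [s [sF scov]]].
  exists [:: setT]; split => [i|x]; last by exists 0%N.
  rewrite ltnS leqn0 => /eqP -> /=; exists (fun _ => 0%N); split => //.
  by rewrite eqEsubset; split => x //= _ i.
pose p := size U.
pose t := mkseq (fun q => nth set0 s (q %/ p)%N `&`
  (fiter f (a n) @^-1` nth set0 U (q %% p)%N)) (size s * p).
exists t; split.
  move=> q; rewrite size_mkseq => qlt.
  have p0 : (0 < p)%N by rewrite lt0n; apply/eqP => p0; move: qlt; rewrite p0 muln0.
  have qs : (q %/ p < size s)%N by rewrite ltn_divLR.
  have qp : (q %% p < p)%N by rewrite ltn_pmod.
  have [j [jU Bj]] := sF _ qs.
  exists (fun i => if (i < n)%N then j i else (q %% p)%N); split.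
    by move=> i _; case: ifP => // /jU.
  rewrite nth_mkseq // Bj eqEsubset; split => x /=.
    move=> [hB hU] i ilt; case: ifP => iln; first exact: hB.
    have -> : i = n by apply/eqP; rewrite eqn_leq -ltnS ilt leqNgt iln.
    exact: hU.
  move=> h; split.
    by move=> i iln; have := h i (leqW iln); rewrite /= iln.
  by have := h n (ltnSn n); rewrite /= ltnn.
move=> x; have [i ist hx] := scov x; have [l lp hl] := Ucov (fiter f (a n) x).
have p0 : (0 < p)%N := leq_ltn_trans (leq0n l) lp.
exists (i * p + l)%N.
  rewrite size_mkseq; apply: (@leq_trans (i.+1 * p)); first by rewrite mulSn addnC ltn_add2r.
  by rewrite leq_mul2r ist orbT.
rewrite nth_mkseq; last first.
  apply: (@leq_trans (i.+1 * p)); first by rewrite mulSn addnC ltn_add2r.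
  by rewrite leq_mul2r ist orbT.
by rewrite divnMDl // divn_small // addn0 modnMDl modn_small.
Qed.

Lemma esup_gt (u : nat -> \bar R) (c : \bar R) : (c < limn_esup u)%E ->
  forall N, exists2 m, (N <= m)%N & (c < u m)%E.
Proof.
move=> h N; have : (c < esups u N)%E.
  apply: (lt_le_trans h); rewrite limn_esup_lim; apply: lime_le.
    exact: is_cvg_esups.
  by exists N => // m /= Nm; exact: nonincreasing_esups.
by move=> /ereal_sup_gt [_ [m /= Nm <-] cu]; exists m.
Qed.

Lemma esup_ge (u : nat -> \bar R) (x : \bar R) :
  (forall N, exists2 n, (N <= n)%N & (x <= u n)%E) -> (x <= limn_esup u)%E.
Proof.
move=> h; rewrite limn_esup_lim; apply: lime_ge; first exact: is_cvg_esups.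
apply: nearW => N; have [n Nn hx] := h N; apply: (le_trans hx).
by apply: ereal_sup_ubound; exists n.
Qed.

Lemma join_mono (f : nat -> X -> X) a U m m' : (m <= m')%N ->
  (Ncov (join_cover f a U m) <= Ncov (join_cover f a U m'))%E.
Proof.
move=> mm; apply: Ncov_refine => _ [j [jU ->]].
exists (\bigcap_(i in [set i | (i < m)%N]) (fiter f (a i) @^-1` nth set0 U (j i))).
  exists j; split => // i im; apply: jU; exact: leq_trans im mm.
by move=> x /= h i im; apply: h; exact: leq_trans im mm.
Qed.

Lemma join_refine (f : nat -> X -> X) (U V : seq (set X)) k (d e : R) n
    (x0 : X) (s : seq X) (L : X -> nat) : (0 < k)%N ->
  V = map (fun x => [set y | mdist x y < d]) s ->
  (forall y, (L y < size U)%N /\ forall z, mdist y z < e -> nth set0 U (L y) z) ->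
  (forall x y, mdist x y < d -> forall s r, (r <= k)%N ->
    mdist (fiter (fun m => f (s + m)) r x) (fiter (fun m => f (s + m)) r y) < e) ->
  (Ncov (join_cover f id U (k * n)) <=
   Ncov (join_cover f (fun i => k * i)%N V n))%E.
Proof.
move=> k0 HV hL heq; apply: Ncov_refine => _ [j [jV ->]].
pose c q := L (fiter (fun m => f (k * (q %/ k) + m)%N) (q %% k)%N
  (nth x0 s (j (q %/ k)%N))).
exists (\bigcap_(i in [set i | (i < k * n)%N]) (fiter f (id i) @^-1` nth set0 U (c i))).
  by exists c; split => // q _; exact: (hL _).1.
move=> x /= hx q qlt.
have iln : (q %/ k < n)%N by rewrite ltn_divLR // mulnC.
rewrite /preimage /=. have -> : fiter f q x = fiter (fun m => f (k * (q %/ k) + m)%N) (q %% k)%N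
    (fiter f (k * (q %/ k))%N x) by rewrite -fiterD mulnC -divn_eq.
apply: (hL _).2; apply: heq; last by rewrite ltnW // ltn_pmod.
have := hx _ iln; rewrite HV (nth_map x0) //.
by have := jV _ iln; rewrite HV size_map.
Qed.

End Aux.

Theorem proposition4p3 (R : realType) (X : metricType R)
  (f : nat -> X -> X) :
  compact [set: X] ->
  (forall n, continuous (f n)) ->
  equicontinuous_seq f ->
  (0 < top_entropy f)%E ->
  sup_seq_entropy f = +oo%E.
Proof.
move=> cX fcont equi hpos.
have [_ [U Uc <-] Upos] := ereal_sup_gt hpos.
set bU := (fun n : nat => _) in Upos.
have [c c0 cL] : exists2 c : R, 0 < c & (c%:E < limn_esup bU)%E.
  move: Upos; case: (limn_esup bU) => [r| |] //= r0.
    by exists (r / 2); rewrite ?lte_fin; move: r0; rewrite lte_fin => r0; lra.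
  by exists 1; rewrite ?ltry.
have [x0 _] : exists x0 : X, True.
  apply: contrapT => hX; have [m _ hm] := esup_gt cL 0.
  have Nle : (Ncov (join_cover f id U m) <= 0)%E.
    have -> : (0 = (size ([::] : seq (set X)))%:R%:E)%E by [].
    apply: Ncov_le_size; split => // x; exfalso; apply: hX; by exists x.
  have N0 : Ncov (join_cover f id U m) = 0%E.
    by apply/eqP; rewrite eq_le Nle Ncov_ge0.
  move: hm; rewrite /bU N0 /= lte_fin ln0 // mul0r => c0'.
  by move: c0; rewrite ltNge (ltW c0').
suff H : forall M : R, (M%:E < sup_seq_entropy f)%E.
  case E: (sup_seq_entropy f) => [r| |] //.
    by have := H r; rewrite E ltxx.
  by have := H 0; rewrite E.
move=> M.
have [k0 hk0] : exists k : nat, 2 * `|M| / c < k%:R.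
  by exists (Num.truncn (2 * `|M| / c)).+1; exact: truncnS_gt.
pose k := k0.+1.
have kpos : (0 < k)%N by [].
have hk : M < c * k%:R / 2.
  have : 2 * `|M| / c < k%:R.
    by apply: (lt_le_trans hk0); rewrite ler_nat.
  rewrite ltr_pdivrMr // => h.
  have := ler_norm M; nra.
have [e e0 hLeb] := lebesgue_num cX Uc.
have : forall y, exists i, (i < size U)%N /\
    forall z, mdist y z < e -> nth set0 U i z.
  by move=> y; have [i iU h] := hLeb y; exists i.
case/choice => L hL.
have [d d0 hd] := comp_equi equi k e0.
have [s hs] := @finite_balls _ _ (fun _ => d) cX (fun _ => d0).
pose V := map (fun x => [set y | mdist x y < d]) s.
have Vc : open_cover V.
  split.
    move=> i; rewrite size_map => iS; rewrite (nth_map x0) //.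
    exact: mball_open.
  move=> x; have [y ys hy] := hs x; exists (index y s).
    by rewrite size_map index_mem.
  by rewrite (nth_map x0) ?index_mem // nth_index.
have sinc : strictly_increasing (fun i => k * i)%N.
  by move=> i i' ii; rewrite ltn_pmul2l.
have h1 : (seq_entropy f (fun i => k * i)%N <= sup_seq_entropy f)%E.
  by apply: ereal_sup_ubound; exists (fun i => (k * i)%N).
apply: (lt_le_trans _ h1).
set bV := (fun n : nat =>
  ((ln (fine (Ncov (join_cover f (fun i => k * i)%N V n)))) / n%:R)%:E).
have h2 : (limn_esup bV <= seq_entropy f (fun i => k * i)%N)%E.
  by apply: ereal_sup_ubound; exists V.
apply: (lt_le_trans _ h2).
apply: (@lt_le_trans _ _ (c * k%:R / 2)%:E); first by rewrite lte_fin.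
apply: esup_ge => N.
have [m Nm hm] := esup_gt cL (k * (N + 2)).
pose q := (m %/ k)%N.
have qN : (N + 2 <= q)%N by rewrite leq_divRL // mulnC.
exists q.+1; first by apply: (leq_trans _ (leqW qN)); rewrite leq_addr.
have m0 : (0 < m)%N.
  apply: leq_trans Nm; rewrite muln_gt0 kpos /=; by rewrite addn2.
have mR : (0 : R) < m%:R by rewrite ltr0n.
move: hm; rewrite /bU /bV /= !lte_fin lee_fin ltr_pdivlMr // => hm.
set NU := fine _ in hm.
set NV := fine _.
have NU1 : 1 < NU.
  rewrite ltNge; apply/negP => /ln_le0 h.
  have : 0 < c * m%:R by exact: mulr_gt0.
  lra.
have fU : Ncov (join_cover f id U m) \is a fin_num.
  have [sl hsl] := @join_covl R X f id U m (proj2 Uc); exact: Ncov_fin hsl.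
have fV : Ncov (join_cover f (fun i => k * i)%N V q.+1) \is a fin_num.
  have [sl hsl] := @join_covl R X f (fun i => k * i)%N V q.+1 (proj2 Vc).
  exact: Ncov_fin hsl.
have le1 : NU <= NV.
  rewrite /NU /NV; apply: fine_le => //.
  have mk : (m <= k * q.+1)%N by rewrite mulnC ltnW // ltn_ceil.
  apply: (le_trans (join_mono f id U mk)).
  exact: (@join_refine R X f U V k d e q.+1 x0 s L kpos erefl hL hd).
have NV0 : 0 < NV by lra.
have lnle : ln NU <= ln NV by rewrite ler_ln // posrE; lra.
rewrite ler_pdivlMr ?ltr0n //.
have qm : ((k * q)%N%:R <= m%:R :> R) by rewrite ler_nat mulnC leq_divM.
rewrite natrM in qm.
have q1 : (1 : R) <= q%:R.
  by rewrite ler1n; apply: leq_trans qN; rewrite addn2.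
have kR : (0 : R) < k%:R by rewrite ltr0n.
have hA : c * (k%:R * q%:R) <= c * m%:R by rewrite ler_wpM2l // ltW.
have hB : 0 <= (c * k%:R) * (q%:R - 1).
  by rewrite mulr_ge0 // ?subr_ge0 // mulr_ge0 // ltW.
apply: (@le_trans _ _ (c * (k%:R * q%:R))); last first.
  apply: (le_trans hA); apply: ltW; exact: (lt_le_trans hm lnle).
have -> : c * k%:R / 2 * q.+1%:R =
    c * (k%:R * q%:R) - (c * k%:R) * (q%:R - 1) / 2.
  by rewrite -natr1; field.
by rewrite lerBlDr lerDl divr_ge0.
Qed.
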